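(* Let $n\ge 1$, let $a>0$ be a scaling factor, and let $\alpha=(\alpha_1,\alpha_2,\dotsc)$ be a weak composition of $n$. Let $\operatorname{ord}\alpha$ denote the partition obtained by arranging the parts of $\alpha$ in weakly decreasing order. Let $f:\mathbb{R}_{\ge 0}\to\mathbb{R}_{\ge 0}$ be right-continuous and weakly decreasing with $f(x)\to 0$ as $x\to\infty$. Then \[ \|\rho_a(\operatorname{ord}\alpha)-f\|_\infty\le \|\rho_a(\alpha)-f\|_\infty, \] where $\|g\|_\infty=\sup\{|g(x)|:x\ge 0\}$.
   Context: A weak composition of $n$ is an infinite sequence $\alpha=(\alpha_1,\alpha_2,\dotsc)$ of nonnegative integers with $\sum_i\alpha_i=n$. Its diagram-boundary function is $\partial\alpha(x)=\alpha_{\lfloor x\rfloor+1}$ for $x\ge 0$. With scaling factor $a>0$ (row lengths multiplied by $1/a$, column heights by $a/n$), the rescaled diagram-boundary function is $\rho_a(\alpha)(x)=\frac{a}{n}\,\partial\alpha(ax)=\frac{a}{n}\alpha_{\lfloor ax\rfloor+1}$; the same definition applies to partitions (viewed as weakly decreasing weak compositions). *)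

(* Defs.v *)
From HB Require Import structures.
From mathcomp Require Import all_boot all_order all_algebra.
From mathcomp Require Import all_classical all_reals all_analysis.
Set Implicit Arguments. Unset Strict Implicit. Unset Printing Implicit Defensive.
Import Order.TTheory GRing.Theory Num.Theory.
Local Open Scope ring_scope.
Local Open Scope classical_set_scope.

(* A weak composition alpha = (alpha_1, alpha_2, ...) (finitely many nonzero
   parts) is represented by a finite list s : seq nat, with
   alpha_{i+1} = nth 0 s i (i.e. s followed by infinitely many zeros).
   It is a weak composition of n iff sumn s = n. *)
Definition part (s : seq nat) (i : nat) : nat := nth 0%N s i.

Definition ord (s : seq nat) : seq nat := sort geq s.

(* rescaled diagram-boundary function:
   rho_a(alpha)(x) = a/n * alpha_{floor(a x) + 1}, for x >= 0.
   For x >= 0 (and a > 0), Num.truncn (a * x) is floor(a x). *)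
Definition rho {R : realType} (n : nat) (a : R) (s : seq nat) (x : R) : R :=
  a / n%:R * (part s (Num.truncn (a * x)))%:R.

Definition supnorm {R : realType} (g : R -> R) : \bar R :=
  ereal_sup [set (`|g x|)%:E | x in `[0, +oo[%classic].

(* Main.v *)
Require Import Defs.
From HB Require Import structures.
From mathcomp Require Import all_boot all_order all_algebra.
From mathcomp Require Import all_classical all_reals all_analysis.
Import Order.TTheory GRing.Theory Num.Theory.
Import numFieldNormedType.Exports.
Local Open Scope ring_scope.
Local Open Scope classical_set_scope.

Lemma count_pre_ge (p : pred nat) (s : seq nat) m :
  (forall j, (j < m)%N -> p (nth 0%N s j)) -> (m <= size s)%N ->
  (m <= count p s)%N.
Proof.
elim: s m => [|x s IH] [|m] //= H Hm.
have px : p x by have := H 0%N isT.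
rewrite px add1n ltnS; apply: IH => // j jm; exact: (H j.+1).
Qed.

Lemma count_suf_le (p : pred nat) (s : seq nat) k :
  (forall j, (k <= j)%N -> ~~ p (nth 0%N s j)) -> (count p s <= k)%N.
Proof.
elim: s k => [|x s IH] [|k] //= H.
- have px := H 0%N isT; rewrite /= in px; rewrite (negbTE px) add0n.
  apply: IH => j _; exact: (H j.+1).
- have := IH k (fun j jk => H j.+1 jk).
  by case: (p x) => /=; rewrite ?add1n ?add0n ?ltnS // => h; apply: leqW.
Qed.

Lemma geq_trans' : transitive geq.
Proof. by move=> y x z h1 h2; apply: leq_trans h2 h1. Qed.

Lemma ord_sorted s : sorted geq (ord s).
Proof. by apply: sort_sorted => x y; apply: leq_total. Qed.

Lemma ord_perm s : perm_eq (ord s) s.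
Proof. by rewrite /ord perm_sort. Qed.

Lemma ord_U s k : exists2 j, (k <= j)%N & (part (ord s) k <= part s j)%N.
Proof.
set t := ord s; set v := part t k.
have [v0|vpos] := eqVneq v 0%N; first by exists k => //; rewrite v0.
have kt : (k < size t)%N.
  rewrite ltnNge; apply/negP => h; move: vpos; by rewrite /v /part nth_default.
have [//|H] := pselect (exists2 j, (k <= j)%N & (v <= part s j)%N).
have c1 : (count (fun x => v <= x)%N s <= k)%N.
  apply: count_suf_le => j kj; apply/negP => vj; apply: H; by exists j.
have c2 : (k.+1 <= count (fun x => v <= x)%N t)%N.
  apply: count_pre_ge => // j jk.
  have := (sorted_leq_nth geq_trans' leqnn 0%N (ord_sorted s)) j k.
  rewrite ltnS in jk.
  rewrite !inE kt => /(_ (leq_ltn_trans jk kt) isT jk); exact.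
have := (permP (ord_perm s)) (fun x => v <= x)%N.
rewrite -/t => e; move: c2; rewrite e => c2.
have := leq_trans c2 c1; by rewrite ltnn.
Qed.

Lemma ord_L s k : exists2 j, (j <= k)%N & (part s j <= part (ord s) k)%N.
Proof.
set t := ord s; set v := part t k.
have [//|H] := pselect (exists2 j, (j <= k)%N & (part s j <= v)%N).
have H' : forall j, (j <= k)%N -> (v < part s j)%N.
  move=> j jk; rewrite ltnNge; apply/negP => h; apply: H; by exists j.
have ks : (k < size s)%N.
  rewrite ltnNge; apply/negP => h; have := H' k (leqnn k).
  by rewrite /part nth_default.
have c1 : (k.+1 <= count (fun x => v < x)%N s)%N.
  by apply: count_pre_ge => // j jk; apply: H'.
have c2 : (count (fun x => v < x)%N t <= k)%N.
  apply: count_suf_le => j kj; rewrite -leqNgt.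
  have [jt|jt] := ltnP j (size t); last by rewrite nth_default.
  have := (sorted_leq_nth geq_trans' leqnn 0%N (ord_sorted s)) k j.
  rewrite !inE jt => /(_ (leq_ltn_trans kj jt) isT); apply => //.
have := (permP (ord_perm s)) (fun x => v < x)%N.
rewrite -/t => e; move: c2; rewrite e => c2.
have := leq_trans c1 c2; by rewrite ltnn.
Qed.

Theorem lemma1 (R : realType) (n : nat) (a : R) (s : seq nat) (f : R -> R) :
  (1 <= n)%N -> 0 < a -> sumn s = n ->
  (forall x, 0 <= x -> 0 <= f x) ->
  (forall x : R, 0 <= x -> f t @[t --> x^'+] --> f x) ->
  (forall x y, 0 <= x -> x <= y -> f y <= f x) ->
  f t @[t --> +oo] --> (0 : R) ->
  Order.le (supnorm (fun x => rho n a (ord s) x - f x))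
           (supnorm (fun x => rho n a s x - f x)).
Proof.
move=> _ a0 _ _ _ fdec _.
set c := a / n%:R.
have c0 : 0 <= c by apply: divr_ge0; [exact: ltW|exact: ler0n].
have a0' : a != 0 by rewrite gt_eqF.
have aj : forall j : nat, a * (j%:R / a) = j%:R.
  by move=> j; rewrite mulrCA divff // mulr1.
apply: ge_ereal_sup => _ [x x0 <-].
have {}x0 : 0 <= x by move: x0; rewrite /= in_itv /= andbT.
have ax0 : 0 <= a * x by apply: mulr_ge0 => //; exact: ltW.
suff [y [y0 hy]] : exists y, 0 <= y /\
    `|rho n a (ord s) x - f x| <= `|rho n a s y - f y|.
  apply: le_ereal_sup_tmp; exists (`|rho n a s y - f y|)%:E; last by rewrite lee_fin.
  exists y => //=; by rewrite in_itv /= andbT.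
set k := Num.truncn (a * x).
have rhoE : forall t z, rho n a t z = c * (part t (Num.truncn (a * z)))%:R by [].
have [fu|uf] := leP (f x) (rho n a (ord s) x).
- have [j kj hj] := ord_U s k.
  set y := Num.max x (j%:R / a).
  have y0 : 0 <= y by rewrite le_max x0.
  have xy : x <= y by rewrite le_max lexx.
  have ty : Num.truncn (a * y) = j.
    rewrite /y; case: leP => h.
      by rewrite aj natrK.
    have : (j <= k)%N.
      rewrite truncn_ge_nat //; rewrite -(aj j); apply: ltW.
      by rewrite ltr_pM2l.
    by move=> jk; apply/eqP; rewrite eqn_leq jk kj.
  exists y; split => //.
  have h1 : rho n a (ord s) x <= rho n a s y.
    by rewrite !rhoE ty; apply: ler_wpM2l => //; rewrite ler_nat.
  have h2 := fdec _ _ x0 xy.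
  rewrite ger0_norm ?subr_ge0 //; apply: le_trans (ler_norm _).
  by rewrite lerB.
- have [j jk hj] := ord_L s k.
  set y := j%:R / a.
  have y0 : 0 <= y by apply: divr_ge0; [exact: ler0n|exact: ltW].
  have ty : Num.truncn (a * y) = j by rewrite /y aj natrK.
  have yx : y <= x.
    rewrite /y mulrC ler_pdivrMl //.
    apply: (@le_trans _ _ (k%:R)); first by rewrite ler_nat.
    by rewrite truncn_le.
  exists y; split => //.
  have h1 : rho n a s y <= rho n a (ord s) x.
    by rewrite !rhoE ty; apply: ler_wpM2l => //; rewrite ler_nat.
  have h2 := fdec _ _ y0 yx.
  rewrite ltr0_norm ?subr_lt0 // opprB.
  rewrite -normrN opprB.
  apply: le_trans (ler_norm _); by rewrite lerB.
Qed.
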